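(* Let $x,y$ be non-commuting indeterminates and $C=xyx^{-1}y^{-1}$. Let $(R_n)_{n\in\mathbb Z}$ be the solution of $$R_{n+1}CR_{n-1}=R_n^2+1\qquad(n\in\mathbb Z)$$ with $R_0=yxy^{-1}$ and $R_1=y$. Put $$y_1=y^2x^{-1}y^{-1},\qquad y_2=x^{-1}y^{-1},\qquad y_3=xy^{-1}.$$ Then for all $n\ge 0$, $R_nR_0^{-1}$ equals the sum, over all paths on $\{0,1,2,3\}$ with $2n$ steps of the form $i\to i\pm1$ that start and end at $0$, of the weight of the path. The weight of a path is the product, from left to right in the order the steps are taken, of the factor $1$ for each step $i\to i+1$ and the factor $y_i$ for each step $i\to i-1$.
   Context: Work in the free skew field (non-commutative rational functions) over $\mathbb C$ generated by $x,y$. *)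

(* Defs.v *)
From mathcomp Require Import all_boot all_order all_algebra.
Set Implicit Arguments. Unset Strict Implicit. Unset Printing Implicit Defensive.
Import GRing.Theory.
Local Open Scope ring_scope.

Definition is_division_ring (D : unitRingType) : Prop :=
  forall a : D, a != 0 -> a \is a GRing.unit.

Definition Cxy (D : unitRingType) (x y : D) : D := x * y * x^-1 * y^-1.

Definition is_R_solution (D : unitRingType) (x y : D) (R : int -> D) : Prop :=
  [/\ R 0 = y * x * y^-1, R 1 = y &
      forall n : int, R (n + 1) * Cxy x y * R (n - 1) = R n ^+ 2 + 1].

Definition ywt (D : unitRingType) (x y : D) (i : nat) : D :=
  match i with
  | 1 => y ^+ 2 * x^-1 * y^-1
  | 2 => x^-1 * y^-1
  | 3 => x * y^-1
  | _ => 0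
  end.

(* A path with m steps on {0,1,2,3}: its sequence of m+1 visited vertices. *)
Definition pvert (m : nat) (p : {ffun 'I_m.+1 -> 'I_4}) (k : nat) : nat :=
  nat_of_ord (p (inord k)).

Definition is_Dyck_walk (n : nat) (p : {ffun 'I_(2 * n).+1 -> 'I_4}) : bool :=
  [&& pvert p 0 == 0%N, pvert p (2 * n) == 0%N &
      [forall k : 'I_(2 * n),
        (pvert p k.+1 == (pvert p k).+1) || (pvert p k == (pvert p k.+1).+1)]].

Definition step_wt (D : unitRingType) (x y : D) (a b : nat) : D :=
  if b == a.+1 then 1 else ywt x y a.

Definition path_wt (D : unitRingType) (x y : D) (n : nat)
    (p : {ffun 'I_(2 * n).+1 -> 'I_4}) : D :=
  \prod_(k < 2 * n) step_wt x y (pvert p k) (pvert p k.+1).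

(* Main.v *)
Require Import Defs.
From mathcomp Require Import all_boot all_order all_algebra.
Import GRing.Theory.
Set Implicit Arguments. Unset Strict Implicit. Unset Printing Implicit Defensive.
Local Open Scope ring_scope.

Definition Vw (D : nzRingType) (ms : nat -> nat -> D) (m : nat)
  (p : {ffun 'I_m.+1 -> 'I_4}) : D :=
  \prod_(k < m) ms (pvert p k) (pvert p k.+1).

Definition Tw (D : nzRingType) (ms : nat -> nat -> D) (m j : nat) : D :=
  \sum_(p : {ffun 'I_m.+1 -> 'I_4} | (pvert p 0 == 0%N) && (pvert p m == j)) Vw ms p.

Definition extp (m : nat) (qt : {ffun 'I_m.+1 -> 'I_4} * 'I_4) : {ffun 'I_m.+2 -> 'I_4} :=
  [ffun i : 'I_m.+2 => if (i < m.+1)%N then qt.1 (inord i) else qt.2].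

Definition resp (m : nat) (p : {ffun 'I_m.+2 -> 'I_4}) : {ffun 'I_m.+1 -> 'I_4} * 'I_4 :=
  ([ffun i : 'I_m.+1 => p (inord i)], p ord_max).

Lemma extpK m : cancel (@extp m) (@resp m).
Proof.
case=> q t; rewrite /resp /extp; congr pair.
  apply/ffunP=> i; rewrite !ffunE inordK; last by apply: leqW; exact: ltn_ord.
  rewrite ltn_ord; congr (q _); apply: val_inj; rewrite /= inordK //.
by rewrite ffunE /= ltnn.
Qed.

Lemma respK m : cancel (@resp m) (@extp m).
Proof.
move=> p; apply/ffunP=> i; rewrite /resp /extp !ffunE /=.
case: ifP=> hi; rewrite ?ffunE; congr (p _); apply: val_inj; rewrite /= ?inordK //.
by apply/eqP; rewrite eqn_leq (leqNgt m.+1) hi /=; exact: (ltn_ord i).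
Qed.

Lemma pvert_ext m q t k : (k <= m)%N -> pvert (@extp m (q, t)) k = pvert q k.
Proof.
move=> hk; rewrite /pvert ffunE inordK ?ltnS ?hk //; last by apply: leqW.
Qed.

Lemma pvert_ext_last m q t : pvert (@extp m (q, t)) m.+1 = t.
Proof. by rewrite /pvert ffunE inordK // ltnn. Qed.

Lemma Vw_ext (D : nzRingType) (ms : nat -> nat -> D) m q t :
  Vw ms (@extp m (q, t)) = Vw ms q * ms (pvert q m) t.
Proof.
rewrite /Vw big_ord_recr /= pvert_ext_last pvert_ext //; congr (_ * _).
by apply: eq_bigr=> k _; rewrite !pvert_ext // ltnW.

Qed.

Lemma Tw_S (D : nzRingType) (ms : nat -> nat -> D) m j : (j < 4)%N ->
  Tw ms m.+1 j = \sum_(i < 4) Tw ms m i * ms i j.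
Proof.
move=> hj; rewrite /Tw.
rewrite (reindex (@extp m)); last by exists (@resp m)=> p _; [exact: extpK | exact: respK].
rewrite /=.
rewrite -(pair_big_dep xpredT (fun q t => (pvert (@extp m (q, t)) 0 == 0%N) && (pvert (extp (q, t)) m.+1 == j)) (fun q t => Vw ms (extp (q,t)))) /=.
under eq_bigr do (under eq_bigl do rewrite pvert_ext // pvert_ext_last).
under eq_bigr do (under eq_bigr do rewrite Vw_ext).
under [RHS]eq_bigr do rewrite mulr_suml.
under [RHS]eq_bigr do rewrite big_mkcond.
rewrite [RHS]exchange_big /=.
apply: eq_bigr=> q _.
case: (eqVneq (pvert q 0) 0%N)=> h0 /=.
  rewrite (big_pred1 (Ordinal hj)); last by move=> i.
  rewrite (bigD1 (q (inord m))) //= /pvert eqxx big1 ?addr0 //.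
  by move=> i hi; case: eqP=> // /val_inj e; rewrite e eqxx in hi.
by rewrite big_pred0_eq big1_eq.
Qed.

Lemma Tw0 (D : nzRingType) (ms : nat -> nat -> D) j :
  Tw ms 0 j = (j == 0%N)%:R.
Proof.
rewrite /Tw; case: (eqVneq j 0%N) => [->|hj].
  rewrite (big_pred1 [ffun => ord0]) /Vw ?big_ord0 //.
  move=> p /=; rewrite andbb; apply/eqP/eqP => [h|->]; last by rewrite /pvert ffunE.
  apply/ffunP=> i; rewrite ffunE (ord1 i); apply: val_inj => /=; move: h; rewrite /pvert.
  by have -> : (inord 0 : 'I_1) = ord0 by apply: val_inj; rewrite /= inordK.
rewrite big_pred0 //= => p; apply/negbTE/andP=> [[/eqP -> /eqP h]].
by rewrite h eqxx in hj.
Qed.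

Lemma prod_zero (D : nzRingType) (F : nat -> D) m k :
  (k < m)%N -> F k = 0 -> \prod_(i < m) F i = 0.
Proof.
elim: m => // m IH hk hF; rewrite big_ord_recr /=.
case: (ltngtP k m) => h.
- by rewrite IH // mul0r.
- by move: hk; rewrite ltnS leqNgt h.
- by rewrite -h hF mulr0.
Qed.

Definition mstep (D : unitRingType) (x y : D) (a b : nat) : D :=
  if b == a.+1 then 1 else if a == b.+1 then ywt x y a else 0.

Lemma Dyck_Tw (D : unitRingType) (x y : D) n :
  \sum_(p : {ffun 'I_(2 * n).+1 -> 'I_4} | is_Dyck_walk p) path_wt x y p
  = Tw (mstep x y) (2 * n) 0.
Proof.
rewrite /Tw big_mkcond [RHS]big_mkcond; apply: eq_bigr => p _.
rewrite /is_Dyck_walk.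
case: (pvert p 0 == 0%N); case: (pvert p (2 * n) == 0%N) => //=.
case: forallP => [hw|hw].
  rewrite /path_wt /Vw; apply: eq_bigr => k _.
  rewrite /mstep /step_wt; case: ifP => // h1.
  by move: (hw k); rewrite h1 /= => ->.
rewrite /Vw; move: hw => /forallP; rewrite negb_forall => /existsP [k hk].
symmetry; apply: (@prod_zero _ (fun i : nat => mstep x y (pvert p i) (pvert p i.+1)) _ k); first exact: ltn_ord.
by rewrite /mstep; move: hk; rewrite negb_or => /andP [/negbTE -> /negbTE ->].
Qed.
Ltac canc hx hy := do 8 rewrite ?mulrA ?(mulrK hx) ?(mulrVK hx) ?(mulrK hy) ?(mulrVK hy) ?(mulrV hx) ?(mulVr hx) ?(mulrV hy) ?(mulVr hy) ?mul1r ?mulr1.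

Lemma int_ids (k : nat) : ((k.+1)%:Z + 1 = (k.+2)%:Z) /\ ((k.+1)%:Z - 1 = k%:Z).
Proof. by split; [rewrite addrC -intS | rewrite intS [1 + _]addrC addrK]. Qed.


Lemma alg_main (D : unitRingType) (x y : D) (hx : x \is a GRing.unit) (hy : y \is a GRing.unit)
    (R : int -> D) (hRu : forall n : int, R n \is a GRing.unit)
    (hR : is_R_solution x y R) (n : nat) :
    let r := fun k : nat => R k%:Z in
    r n.+2 * x = r n.+1 * (y + y^-1 + x * x * y^-1) - r n * (y * x * y^-1).
Proof.
move=> r;
case: hR => hR0 hR1 hRr.
set C := Cxy x y.
have hrec k : r k.+2 * C * r k = r k.+1 ^+ 2 + 1.
  by have [e1 e2] := int_ids k; have := hRr (k.+1)%:Z; rewrite e1 e2.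
have hru k : r k \is a GRing.unit by apply: hRu.
have hr0 : r 0%N = y * x * y^-1 by [].
have hr1 : r 1%N = y by [].
have hCu : C \is a GRing.unit by rewrite /C /Cxy !unitrMl ?unitrV.
have E k : r k * r k.+1 = r k.+1 * C * r k.
  elim: k => [|k IH].
    rewrite hr0 hr1 /C /Cxy. by canc hx hy.
  have hu : C * r k \is a GRing.unit by rewrite unitrMl.
  have h1 : (r k.+1 * r k.+2 - r k.+2 * C * r k.+1) * (C * r k) = 0.
    rewrite mulrBl.
    have -> : r k.+1 * r k.+2 * (C * r k) = r k.+1 * (r k.+2 * C * r k) by rewrite !mulrA.
    have -> : r k.+2 * C * r k.+1 * (C * r k) = (r k.+2 * C * r k) * r k.+1.
      by rewrite -!mulrA IH !mulrA.
    by rewrite hrec expr2 mulrDl mulrDr !mulrA mul1r mulr1 subrr.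
  apply/eqP; rewrite -subr_eq0; apply/eqP.
  by rewrite -[LHS](mulrK hu) h1 mul0r.
set K := (r 1%N)^-1 * (r 2%N * C + r 0%N).
have L k : r k.+2 * C + r k = r k.+1 * K.
  elim: k => [|k IH]; first by rewrite /K mulVKr.
  have hK : K * r k.+1 = r k.+2 + C * r k.
    apply: (mulrI (hru k.+1)).
    rewrite mulrA -IH mulrDl E mulrDr -E !mulrA //.
  apply: (mulIr (hru k.+1)).
  rewrite mulrDl (hrec k.+1) -mulrA hK mulrDr (mulrA (r k.+2)) hrec -expr2.
  by rewrite addrAC addrA.
have hKr0 : K * r 0%N = y + y^-1 + x * x * y^-1.
  rewrite /K -mulrA mulrDl hrec hr0 hr1 !mulrDr.
  by canc hx hy.
have hxC : C * r 0%N = x by rewrite /C /Cxy hr0; canc hx hy.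
rewrite -{1}hxC mulrA -[r n.+2 * C](addrK (r n)) L mulrBl -(mulrA (r n.+1)) hKr0 hr0 //.
Qed.

Lemma zm_aux (V : zmodType) (b c d e : V) : b + (c - d) = e + b + c - d - e.
Proof. by rewrite addrAC (addrAC (e + b)) (addrAC e) subrr add0r addrA. Qed.

Theorem theorem3p5 (D : unitRingType) (hD : is_division_ring D)
    (hchar : [pchar D] =i pred0)
    (x y : D) (hx : x \is a GRing.unit) (hy : y \is a GRing.unit)
    (R : int -> D) (hRu : forall n : int, R n \is a GRing.unit)
    (hR : is_R_solution x y R) :
  forall n : nat,
    R (n%:Z) * (R 0)^-1 =
    \sum_(p : {ffun 'I_(2 * n).+1 -> 'I_4} | is_Dyck_walk p) path_wt x y p.
Proof.
move=> n; rewrite Dyck_Tw.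
set ms := mstep x y.
have S0 m : Tw ms m.+1 0 = Tw ms m 1 * (y ^+ 2 / x / y).
  by rewrite Tw_S // !big_ord_recr big_ord0 /= /ms /mstep /= -/(mstep x y) !mulr0 ?add0r ?addr0.
have S1 m : Tw ms m.+1 1 = Tw ms m 0 + Tw ms m 2 * (x^-1 / y).
  by rewrite Tw_S // !big_ord_recr big_ord0 /= /ms /mstep /= -/(mstep x y) !mulr0 ?mulr1 ?add0r ?addr0.
have S2 m : Tw ms m.+1 2 = Tw ms m 1 + Tw ms m 3 * (x / y).
  by rewrite Tw_S // !big_ord_recr big_ord0 /= /ms /mstep /= -/(mstep x y) !mulr0 ?mulr1 ?add0r ?addr0.
have S3 m : Tw ms m.+1 3 = Tw ms m 2.
  by rewrite Tw_S // !big_ord_recr big_ord0 /= /ms /mstep /= -/(mstep x y) !mulr0 ?mulr1 ?add0r ?addr0.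
have am := alg_main hx hy hRu hR.
case: hR => hR0 hR1 hRr.
have hr0i : (R 0)^-1 = y * x^-1 * y^-1.
  by rewrite hR0 !invrM ?invrK ?unitrV ?unitrMl // mulrA.
have key : forall k : nat, Tw ms (2 * k) 0 = R k%:Z * (R 0)^-1 /\
    Tw ms (2 * k) 2 = (R (k.+1)%:Z - R k%:Z * (R 0)^-1 * R 1) * x.
  elim=> [|k [IH0 IH2]].
    rewrite !Tw0 /= (_ : R (Posz 0) = R 0) // (_ : R (Posz 1) = R 1) // mulrV // mul1r subrr mul0r; by split.
  have e : (2 * k.+1 = (2 * k).+2)%N by rewrite mulnS.
  rewrite e S0 S2 S1 S3 IH0 IH2.
  rewrite hr0i hR1 expr2.
  split.
    rewrite !mulrDl !mulNr.
    by canc hx hy; rewrite addrC subrK.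
  rewrite !mulrDl !mulNr.
  move: (am k) => /= ->.
  rewrite ?mulrDr ?mulrDl ?mulNr ?mulrN ?mulrBr.
  canc hx hy.
  by rewrite [X in X + _ = _]addrC subrK (zm_aux _ _ _ (R k.+1 * y)).
by case: (key n) => ->.
Qed.
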